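(* Let $\mathfrak g$ be a nilpotent Lie algebra of nilindex $4$ (i.e. $\mathfrak g^4=0$) over a field of characteristic zero, and let $R:\mathfrak g\to\mathfrak g$ be a Rota–Baxter operator of weight 1 with $R(\mathfrak g^i)\subset\mathfrak g^i$ for $i=2,3$. Then the map $$\mathfrak R(x)=R(x)-\tfrac12R([R(x),x])+\tfrac1{12}R\big([[R(x),x],x]+[R(x),[R(x),x]]\big)+\tfrac14R\big([R([R(x),x]),x]\big),\qquad x\in\mathfrak g,$$ is a Rota–Baxter operator on the group $(\mathfrak g,* )$.
   Context: $\mathfrak g^1=\mathfrak g$, $\mathfrak g^n=[\mathfrak g,\mathfrak g^{n-1}]$. Rota–Baxter operator of weight 1 on a Lie algebra: linear $R$ with $[R(x),R(y)]=R([R(x),y]+[x,R(y)]+[x,y])$. The group $(\mathfrak g,* )$ is $\mathfrak g$ with the Baker–Campbell–Hausdorff product $x*y=\log(\exp(x)\exp(y))$ (computed in the completion of $U(\mathfrak g)$ with respect to the filtration induced by $\mathcal F_n\mathfrak g=\mathfrak g^n$; since $\mathfrak g$ is nilpotent this is a finite Lie polynomial in $x,y$). A Rota–Baxter operator on a group $G$ is a map $\mathfrak R:G\to G$ with $\mathfrak R(g)\mathfrak R(h)=\mathfrak R(g\mathfrak R(g)h\mathfrak R(g)^{-1})$ for all $g,h$. *)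

(* Defs.v *)
From HB Require Import structures.
From mathcomp Require Import all_boot all_order all_algebra.
Set Implicit Arguments. Unset Strict Implicit. Unset Printing Implicit Defensive.
Import GRing.Theory.
Local Open Scope ring_scope.

Section Lie.
Variables (K : fieldType) (V : lmodType K) (br : V -> V -> V).

Definition lie_bracket : Prop :=
  [/\ (forall (a : K) (x y z : V), br (a *: x + y) z = a *: br x z + br y z),
      (forall (a : K) (x y z : V), br x (a *: y + z) = a *: br x y + br x z),
      (forall x : V, br x x = 0) &
      (forall x y z : V, br x (br y z) + br y (br z x) + br z (br x y) = 0)].

(* Lower central series: lcs n x <-> x \in g^n, with g^1 = g and
   g^(n+1) = [g, g^n] (the linear span of brackets [a,b], b \in g^n). *)
Inductive lcs : nat -> V -> Prop :=
| lcs_one x : lcs 1 x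
| lcs_br n a b : lcs n b -> lcs n.+1 (br a b)
| lcs_zero n : lcs n.+1 0
| lcs_add n x y : lcs n.+1 x -> lcs n.+1 y -> lcs n.+1 (x + y)
| lcs_scale n (k : K) x : lcs n.+1 x -> lcs n.+1 (k *: x).

Definition linear_map (R : V -> V) : Prop :=
  forall (a : K) (x y : V), R (a *: x + y) = a *: R x + R y.

Definition rota_baxter1 (R : V -> V) : Prop :=
  forall x y : V, br (R x) (R y) = R (br (R x) y + br x (R y) + br x y).

(* The Baker--Campbell--Hausdorff product, truncated after degree 3.
   When g^4 = 0 all BCH terms of degree >= 4 are iterated brackets of
   length >= 4, hence lie in g^4 = 0, so this is exactly log(exp x exp y). *)
Definition bch (x y : V) : V :=
  x + y + 2%:R^-1 *: br x y
    + 12%:R^-1 *: (br x (br x y) + br y (br y x)).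

Definition ginv (x : V) : V := - x.

Definition group_rota_baxter (RR : V -> V) : Prop :=
  forall g h : V,
    bch (RR g) (RR h) = RR (bch g (bch (bch (RR g) h) (ginv (RR g)))).

Definition frakR (R : V -> V) (x : V) : V :=
  R x - 2%:R^-1 *: R (br (R x) x)
    + 12%:R^-1 *: R (br (br (R x) x) x + br (R x) (br (R x) x))
    + 4%:R^-1 *: R (br (R (br (R x) x)) x).

End Lie.

(* Main.v *)
Require Import Defs.
From HB Require Import structures.
From mathcomp Require Import all_boot all_order all_algebra.
Import GRing.Theory.
Local Open Scope ring_scope.

Section Q.
Variables (K : fieldType) (hK : [pchar K] =i pred0).

Lemma intrK_eq0 (z : int) : (z%:~R == 0 :> K) = (z == 0).
Proof.
have H := (pcharf0P K).1 hK.
case: z => n; first by rewrite /= H.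
by rewrite NegzE mulrNz oppr_eq0 H.
Qed.

Let nz_den x : (denq x)%:~R != 0 :> K.
Proof. by rewrite intrK_eq0 denq_eq0. Qed.

Lemma qK_sub (x y : rat) : ratr (x - y) = ratr x - ratr y :> K.
Proof.
have injZtoQ: @injective rat int intr by apply: intr_inj.
apply: (canLR (mulfK (nz_den _))); apply: (mulIf (nz_den x)).
rewrite mulrAC mulrBl divfK ?nz_den // mulrAC -!rmorphM.
apply: (mulIf (nz_den y)); rewrite mulrAC mulrBl divfK ?nz_den //.
rewrite -!(rmorphM, rmorphB); congr _%:~R; apply: injZtoQ.
rewrite !(rmorphM, rmorphB) /= [_ - _]lock /= -lock !numqE.
by rewrite (mulrAC y) -!mulrBl -mulrA mulrAC !mulrA.
Qed.

Lemma qK_mul (x y : rat) : ratr (x * y) = ratr x * ratr y :> K.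
Proof.
have injZtoQ: @injective rat int intr by apply: intr_inj.
rewrite /ratr mulrC mulrAC; apply: canLR (mulKf (nz_den _)) _; rewrite !mulrA.
do 2!apply: canRL (mulfK (nz_den _)) _; rewrite -!rmorphM; congr _%:~R.
apply: injZtoQ; rewrite !rmorphM [x * y]lock /= !numqE -lock.
by rewrite -!mulrA mulrA mulrCA -!mulrA (mulrCA y).
Qed.

Lemma qK0 : ratr 0 = 0 :> K. Proof. by rewrite /ratr /= mul0r. Qed.
Lemma qK1 : ratr 1 = 1 :> K. Proof. by rewrite /ratr /= divr1. Qed.
Lemma qK_opp x : ratr (- x) = - ratr x :> K.
Proof. by rewrite -sub0r qK_sub qK0 sub0r. Qed.
Lemma qK_add x y : ratr (x + y) = ratr x + ratr y :> K.
Proof. by rewrite -{1}[y]opprK qK_sub qK_opp opprK. Qed.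
Lemma qK_inv_nat (n : nat) : ratr (n%:R^-1) = n%:R^-1 :> K.
Proof.
case: n => [|n]; first by rewrite !mulr0n !invr0 qK0.
have H := (pcharf0P K).1 hK.
have nz : (n.+1)%:R != 0 :> K by rewrite H.
have E : ratr (n.+1%:R^-1 * n.+1%:R) = 1 :> K.
  by rewrite mulVf ?qK1 // Num.Theory.pnatr_eq0.
rewrite qK_mul ratr_nat in E.
by apply: (mulIf nz); rewrite mulVf // E.
Qed.
End Q.

Inductive mono := MV of nat | MB of mono & mono | MR of mono.

Fixpoint mdeg m : nat :=
  match m with MV _ => 1 | MB a b => mdeg a + mdeg b | MR a => mdeg a end.

Fixpoint mcmp a b : comparison :=
  match Nat.compare (mdeg a) (mdeg b) with
  | Eq =>
    match a, b with
    | MV i, MV j => Nat.compare i j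
    | MV _, _ => Lt
    | _, MV _ => Gt
    | MR x, MR y => mcmp x y
    | MR _, MB _ _ => Lt
    | MB _ _, MR _ => Gt
    | MB x1 x2, MB y1 y2 =>
      match mcmp x1 y1 with Eq => mcmp x2 y2 | c => c end
    end
  | c => c
  end.

Fixpoint meqb a b : bool :=
  match a, b with
  | MV i, MV j => (i == j)%N
  | MB a1 a2, MB b1 b2 => meqb a1 b1 && meqb a2 b2
  | MR x, MR y => meqb x y
  | _, _ => false
  end.

Lemma meqbP a b : meqb a b -> a = b.
Proof.
elim: a b => [i|a1 IH1 a2 IH2|x IH] [j|b1 b2|y] //=.
- by move/eqP ->.
- by case/andP => /IH1 -> /IH2 ->.
- by move/IH ->.
Qed.

Definition isLt (c : comparison) := if c is Lt then true else false.

Definition lpoly := seq (rat * mono).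

Definition pscale (q : rat) (p : lpoly) : lpoly := [seq (q * cm.1, cm.2) | cm <- p].

Definition mkBr2 x y : lpoly :=
  match y with
  | MB a b =>
    if [&& (mdeg x == 1)%N, (mdeg y == 2)%N & isLt (mcmp b x)]
    then [:: (1, MB b (MB a x)); (-1, MB a (MB b x))]
    else [:: (1, MB x y)]
  | _ => [:: (1, MB x y)]
  end.

Definition mkBr a b : lpoly :=
  if (4 <= mdeg a + mdeg b)%N then [::]
  else if meqb a b then [::]
  else if isLt (mcmp b a) then pscale (-1) (mkBr2 b a) else mkBr2 a b.

Definition mkR m : lpoly :=
  match m with
  | MB (MV i) (MR (MV j)) =>
    if (i < j)%N then
      [:: (1, MB (MR (MV i)) (MR (MV j))); (1, MR (MB (MV j) (MR (MV i))));
          (-1, MR (MB (MV i) (MV j)))]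
    else [:: (1, MR m)]
  | _ => [:: (1, MR m)]
  end.

Fixpoint pbr1 m (q : lpoly) : lpoly :=
  match q with [::] => [::] | (c, m2) :: q' => pscale c (mkBr m m2) ++ pbr1 m q' end.
Fixpoint pbr (p q : lpoly) : lpoly :=
  match p with [::] => [::] | (c, m1) :: p' => pscale c (pbr1 m1 q) ++ pbr p' q end.
Fixpoint pR (p : lpoly) : lpoly :=
  match p with [::] => [::] | (c, m) :: p' => pscale c (mkR m) ++ pR p' end.
Fixpoint ins c m (acc : lpoly) : lpoly :=
  match acc with
  | [::] => [:: (c, m)]
  | (c', m') :: acc' => if meqb m m' then (c + c', m') :: acc' else (c', m') :: ins c m acc'
  end.
Fixpoint collect (p : lpoly) : lpoly :=
  match p with [::] => [::] | (c, m) :: p' => ins c m (collect p') end.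

Inductive expr := EV of nat | EB of expr & expr | ER of expr | EAdd of expr & expr
  | EOpp of expr | EInv of nat & expr | E0.

Fixpoint nrm e : lpoly :=
  match e with
  | EV n => [:: (1, MV n)]
  | EB a b => pbr (nrm a) (nrm b)
  | ER a => pR (nrm a)
  | EAdd a b => nrm a ++ nrm b
  | EOpp a => pscale (-1) (nrm a)
  | EInv n a => pscale (n%:R^-1) (nrm a)
  | E0 => [::]
  end.

Definition checkz e1 e2 := all (fun cm => cm.1 == 0) (collect (nrm (EAdd e1 (EOpp e2)))).

Definition Ephi x :=
  EAdd (EAdd (EAdd x (EOpp (EInv 2 (EB (ER x) x))))
    (EInv 12 (EAdd (EB (EB (ER x) x) x) (EB (ER x) (EB (ER x) x)))))
    (EInv 4 (EB (ER (EB (ER x) x)) x)).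
Definition Ebch x y :=
  EAdd (EAdd (EAdd x y) (EInv 2 (EB x y)))
    (EInv 12 (EAdd (EB x (EB x y)) (EB y (EB y x)))).
Definition EbrR x y := EAdd (EAdd (EB (ER x) y) (EB x (ER y))) (EB x y).
Definition EbchR x y :=
  EAdd (EAdd (EAdd x y) (EInv 2 (EbrR x y)))
    (EInv 12 (EAdd (EbrR x (EbrR x y)) (EbrR y (EbrR y x)))).

Definition eL := EbchR (Ephi (EV 0)) (Ephi (EV 1)).
Definition eU := ER (Ephi (EV 0)).
Definition eRt := Ephi (Ebch (EV 0) (Ebch (Ebch eU (EV 1)) (EOpp eU))).

Lemma check_ok : checkz eL eRt = true.
Proof. vm_compute. reflexivity. Qed.

Section Sound.
Variables (K : fieldType) (hK : [pchar K] =i pred0) (V : lmodType K) (br : V -> V -> V).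
Local Notation lcs := (Defs.lcs br).
Hypothesis hL : lie_bracket br.
Hypothesis hnil : forall x : V, lcs 4 x -> x = 0.
Lemma brDl x y z : br (x + y) z = br x z + br y z.
Proof. by case: hL => H _ _ _; have := H 1 x y z; rewrite !scale1r. Qed.
Lemma brDr x y z : br x (y + z) = br x y + br x z.
Proof. by case: hL => _ H _ _; have := H 1 x y z; rewrite !scale1r. Qed.
Lemma brZl (a : K) x z : br (a *: x) z = a *: br x z.
Proof.
case: hL => H _ _ _; have H0 : br 0 z = 0.
  have := H 1 0 0 z; rewrite !scale1r addr0 => E.
  by apply: (@addrI _ (br 0 z)); rewrite addr0 -E.
by have := H a x 0 z; rewrite H0 !addr0.
Qed.
Lemma brZr (a : K) x z : br z (a *: x) = a *: br z x.
Proof.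
case: hL => _ H _ _; have H0 : br z 0 = 0.
  have := H 1 z 0 0; rewrite !scale1r addr0 => E.
  by apply: (@addrI _ (br z 0)); rewrite addr0 -E.
by have := H a z x 0; rewrite H0 !addr0.
Qed.
Lemma br0l z : br 0 z = 0.
Proof. by have := brZl 0 0 z; rewrite !scale0r. Qed.
Lemma br0r z : br z 0 = 0.
Proof. by have := brZr 0 0 z; rewrite !scale0r. Qed.
Lemma brNl x z : br (- x) z = - br x z.
Proof. by rewrite -scaleN1r brZl scaleN1r. Qed.
Lemma brNr x z : br z (- x) = - br z x.
Proof. by rewrite -scaleN1r brZr scaleN1r. Qed.
Lemma brxx x : br x x = 0.
Proof. by case: hL. Qed.
Lemma brA x y : br x y = - br y x.
Proof.
apply/eqP; rewrite -subr_eq0 opprK; apply/eqP.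
have := brxx (x + y); rewrite brDl !brDr !brxx add0r addr0 => ->.
by [].
Qed.
Lemma jacobi x y z : br x (br y z) + br y (br z x) + br z (br x y) = 0.
Proof. by case: hL. Qed.


Lemma lcsN n x : lcs n.+1 x -> lcs n.+1 (- x).
Proof. by move=> H; rewrite -scaleN1r; apply: lcs_scale. Qed.

Lemma lcsN' n x : lcs n x -> lcs n (- x).
Proof. by case: n => [|n] H; [inversion H | exact: lcsN]. Qed.

Lemma lcs_brl i x a : lcs i x -> lcs i.+1 (br x a).
Proof. by move=> H; rewrite brA; apply: lcsN; apply: lcs_br. Qed.

Lemma lcs_brm i j x y : lcs i x -> lcs j y -> lcs (i + j) (br x y).
Proof.
move=> Hx Hy; elim: Hy i x Hx => {j y}.
- by move=> y i x Hx; rewrite addn1; apply: lcs_brl.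
- move=> n a b Hb IH i x Hx.
  have E : br x (br a b) = - br a (br b x) - br b (br x a).
    by move/eqP: (jacobi x a b); rewrite -addrA addr_eq0 => /eqP ->; rewrite opprD.
  rewrite E addnS; apply: lcs_add; apply: lcsN.
    by apply: lcs_br; rewrite brA; apply: lcsN'; apply: IH.
  rewrite brA; apply: lcsN; rewrite -addSn.
  by apply: IH; apply: lcs_brl.
- by move=> n i x Hx; rewrite br0r addnS; apply: lcs_zero.
- by move=> n y z _ IH1 _ IH2 i x Hx; rewrite brDr addnS; apply: lcs_add; rewrite -addnS; auto.
- by move=> n k y _ IH i x Hx; rewrite brZr addnS; apply: lcs_scale; rewrite -addnS; auto.
Qed.

Lemma lcs_desc n x : lcs n.+2 x -> lcs n.+1 x.
Proof.
move E : n.+2 => m H; elim: H n E => {m x}.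
- by [].
- move=> m a b Hb IH n [E]; subst m; case: n IH Hb => [|n] IH Hb; first exact: lcs_one.
  by apply: lcs_br; apply: IH.
- by move=> m n [E]; subst m; apply: lcs_zero.
- by move=> m x y _ IH1 _ IH2 n [E]; subst m; apply: lcs_add; [apply: IH1 | apply: IH2].
- by move=> m k x _ IH n [E]; subst m; apply: lcs_scale; apply: IH.
Qed.

Lemma lcs_ge4 n x : (4 <= n)%N -> lcs n x -> x = 0.
Proof.
move=> Hn; rewrite -(subnK Hn); elim: (n - 4)%N x => [|k IH] x Hx; first exact: hnil.
move: Hx; rewrite addSn (addnS k 3) => Hx; apply: IH; rewrite (addnS k 3).
exact: lcs_desc.
Qed.

Variable R : V -> V.
Hypothesis hRlin : linear_map R.
Hypothesis hRB : rota_baxter1 br R.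
Hypothesis hR2 : forall x : V, lcs 2 x -> lcs 2 (R x).
Hypothesis hR3 : forall x : V, lcs 3 x -> lcs 3 (R x).
Variables g h : V.

Lemma RD x y : R (x + y) = R x + R y.
Proof. by have := hRlin 1 x y; rewrite !scale1r. Qed.
Lemma R0 : R 0 = 0.
Proof. by have := RD 0 0; rewrite addr0 => E; apply: (@addrI _ (R 0)); rewrite addr0 -E. Qed.
Lemma RZ a x : R (a *: x) = a *: R x.
Proof. by have := hRlin a x 0; rewrite !addr0 R0 addr0. Qed.
Lemma RN x : R (- x) = - R x.
Proof. by rewrite -scaleN1r RZ scaleN1r. Qed.
Lemma RB x y : R (x - y) = R x - R y.
Proof. by rewrite RD RN. Qed.

Lemma Rlcs n x : lcs n x -> lcs n (R x).
Proof.
case: n => [|[|[|[|n]]]] H; first by inversion H.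
- exact: lcs_one.
- exact: hR2.
- exact: hR3.
- by rewrite (@lcs_ge4 n.+4 x isT H) // R0; apply: lcs_zero.
Qed.

Fixpoint mden m : V :=
  match m with
  | MV n => if n is 0%N then g else h
  | MB a b => br (mden a) (mden b)
  | MR a => R (mden a)
  end.

Fixpoint pden (p : lpoly) : V :=
  match p with [::] => 0 | (c, m) :: p' => ratr c *: mden m + pden p' end.

Fixpoint eden e : V :=
  match e with
  | EV n => if n is 0%N then g else h
  | EB a b => br (eden a) (eden b)
  | ER a => R (eden a)
  | EAdd a b => eden a + eden b
  | EOpp a => - eden a
  | EInv n a => n%:R^-1 *: eden a
  | E0 => 0
  end.

Lemma mden_lcs m : lcs (mdeg m) (mden m).
Proof.
elim: m => [n|a IHa b IHb|a IHa] /=.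
- exact: lcs_one.
- exact: lcs_brm.
- exact: Rlcs.
Qed.

Lemma pden_cat p q : pden (p ++ q) = pden p + pden q.
Proof. by elim: p => [|[c m] p IH] /=; rewrite ?add0r // IH addrA. Qed.

Lemma pden_scale c p : pden (pscale c p) = ratr c *: pden p.
Proof.
elim: p => [|[c' m] p IH] /=; first by rewrite scaler0.
by rewrite IH scalerDr qK_mul // scalerA.
Qed.

Lemma mkBr2_sound x y : pden (mkBr2 x y) = br (mden x) (mden y).
Proof.
rewrite /mkBr2; case: y => [n|a b|a] /=; rewrite ?qK1 ?scale1r ?addr0 //.
case: ifP => _ /=; rewrite ?qK1 ?scale1r ?addr0 //.
rewrite qK_opp // qK1 scaleN1r.
move/eqP: (jacobi (mden x) (mden a) (mden b)).
rewrite -addrA addr_eq0 => /eqP ->.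
by rewrite opprD (brA (mden x) (mden a)) brNr opprK addrC.
Qed.

Lemma mkBr_sound a b : pden (mkBr a b) = br (mden a) (mden b).
Proof.
rewrite /mkBr; case: ifP => H4.
  apply/esym/(@lcs_ge4 _ _ H4)/lcs_brm; exact: mden_lcs.
case: ifP => Heq; first by rewrite (meqbP _ _ Heq) brxx.
case: ifP => _; last exact: mkBr2_sound.
by rewrite pden_scale mkBr2_sound qK_opp // qK1 scaleN1r -brA.
Qed.

Lemma mkR_sound m : pden (mkR m) = R (mden m).
Proof.
rewrite /mkR; case: m => [n|a b|a] /=; rewrite ?qK1 ?scale1r ?addr0 //.
case: a => [i|a1 a2|a1] /=; rewrite ?qK1 ?scale1r ?addr0 //.
case: b => [j|b1 b2|b1] /=; rewrite ?qK1 ?scale1r ?addr0 //.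
case: b1 => [j|b1 b2|b1] /=; rewrite ?qK1 ?scale1r ?addr0 //.
case: ifP => _ /=; rewrite ?qK1 ?scale1r ?addr0 // qK_opp // qK1 scaleN1r.
set x := (if i is 0%N then g else h); set y := (if j is 0%N then g else h).
rewrite hRB (brA y (R x)) RN.
rewrite !RD (addrC (R (br (R x) y))) -!addrA; rewrite -[RHS]addr0; congr (_ + _).
by rewrite (addrCA (R (br x y))) subrr addr0 subrr.
Qed.

Lemma pbr1_sound m q : pden (pbr1 m q) = br (mden m) (pden q).
Proof.
elim: q => [|[c m2] q IH] /=; first by rewrite br0r.
by rewrite pden_cat pden_scale mkBr_sound IH brDr brZr.
Qed.

Lemma pbr_sound p q : pden (pbr p q) = br (pden p) (pden q).
Proof.
elim: p => [|[c m] p IH] /=; first by rewrite br0l.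
by rewrite pden_cat pden_scale pbr1_sound IH brDl brZl.
Qed.

Lemma pR_sound p : pden (pR p) = R (pden p).
Proof.
elim: p => [|[c m] p IH] /=; first by rewrite R0.
by rewrite pden_cat pden_scale mkR_sound IH RD RZ.
Qed.

Lemma ins_sound c m acc : pden (ins c m acc) = ratr c *: mden m + pden acc.
Proof.
elim: acc => [|[c' m'] acc IH] //=.
case: ifP => Heq /=.
  by rewrite (meqbP _ _ Heq) qK_add // scalerDl addrA.
by rewrite IH addrCA.
Qed.

Lemma collect_sound p : pden (collect p) = pden p.
Proof. by elim: p => [|[c m] p IH] //=; rewrite ins_sound IH. Qed.

Lemma nrm_sound e : pden (nrm e) = eden e.
Proof.
elim: e => [n|a IHa b IHb|a IHa|a IHa b IHb|a IHa|n a IHa|] /=.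
- by rewrite qK1 scale1r addr0.
- by rewrite pbr_sound IHa IHb.
- by rewrite pR_sound IHa.
- by rewrite pden_cat IHa IHb.
- by rewrite pden_scale IHa qK_opp // qK1 scaleN1r.
- by rewrite pden_scale IHa qK_inv_nat.
- by [].
Qed.

Lemma pden_allz p : all (fun cm => cm.1 == 0) p -> pden p = 0.
Proof.
elim: p => [|[c m] p IH] //= /andP [/eqP -> /IH ->].
by rewrite qK0 scale0r addr0.
Qed.

Lemma checkz_sound e1 e2 : checkz e1 e2 = true -> eden e1 = eden e2.
Proof.
move=> /pden_allz; rewrite collect_sound nrm_sound /= => /eqP.
by rewrite subr_eq0 => /eqP.
Qed.


Definition phi x := x - 2%:R^-1 *: br (R x) x
  + 12%:R^-1 *: (br (br (R x) x) x + br (R x) (br (R x) x))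
  + 4%:R^-1 *: br (R (br (R x) x)) x.
Definition brR x y := br (R x) y + br x (R y) + br x y.
Definition bchR x y := x + y + 2%:R^-1 *: brR x y
  + 12%:R^-1 *: (brR x (brR x y) + brR y (brR y x)).

Lemma key_identity :
  bchR (phi g) (phi h) = phi (bch br g (bch br (bch br (R (phi g)) h) (ginv (R (phi g))))).
Proof. exact (checkz_sound eL eRt check_ok). Qed.

Lemma frak_phi x : frakR br R x = R (phi x).
Proof. by rewrite /frakR /phi !RD RN !RZ !RD. Qed.

Lemma RbrR x y : R (brR x y) = br (R x) (R y).
Proof. by rewrite /brR hRB. Qed.

Lemma bch_R a b : bch br (R a) (R b) = R (bchR a b).
Proof. by rewrite /bchR /bch !RD !RZ RD !RbrR. Qed.

End Sound.

Theorem corollary4p24 (K : fieldType) (hK : [pchar K] =i pred0)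
  (V : lmodType K) (br : V -> V -> V) (hL : lie_bracket br)
  (hnil : forall x : V, lcs br 4 x -> x = 0)
  (R : V -> V) (hRlin : linear_map R) (hRB : rota_baxter1 br R)
  (hR2 : forall x : V, lcs br 2 x -> lcs br 2 (R x))
  (hR3 : forall x : V, lcs br 3 x -> lcs br 3 (R x)) :
  group_rota_baxter br (frakR br R).
Proof.
move=> g h.
rewrite !frak_phi // bch_R //.
by rewrite key_identity.
Qed.
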